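(* Let $\lambda>0$. In a deterministic interest-rate model (as described in the context), if the long tail-Pareto rate $L^{(\lambda)}_{0\infty}$ of index $\lambda$ is finite, then for all $t\ge0$ the long tail-Pareto rate $L^{(\lambda)}_{t\infty}$ is finite and is given by $L^{(\lambda)}_{t\infty}=P_{0t}^{1/\lambda}L^{(\lambda)}_{0\infty}$.
   Context: A deterministic interest-rate model is given by a deterministic initial discount function $T\mapsto P_{0T}>0$ ($T\ge0$, $P_{00}=1$), with discount bond prices at later times determined by absence of arbitrage as $P_{tT}=P_{0T}/P_{0t}$ for $0\le t<T$. For $\lambda>0$, the tail-Pareto rate $L^{(\lambda)}_{tT}$ is defined by $P_{tT}=\left[1+\lambda^{-1}(T-t)L^{(\lambda)}_{tT}\right]^{-\lambda}$, and the long tail-Pareto rate is $L^{(\lambda)}_{t\infty}=\limsup_{T\to\infty}L^{(\lambda)}_{tT}$. *)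

(* Defs.v *)
From mathcomp Require Import all_boot all_order all_algebra.
From mathcomp Require Import all_classical all_reals all_analysis.
Set Implicit Arguments. Unset Strict Implicit. Unset Printing Implicit Defensive.
Import Order.TTheory GRing.Theory Num.Theory numFieldTopology.Exports.
Local Open Scope ring_scope.
Local Open Scope classical_set_scope.

Definition bond_price (R : realType) (P0 : R -> R) (t T : R) : R := P0 T / P0 t.

(* Tail-Pareto rate L^(lam)_{tT}: the unique solution L of
   P_{tT} = (1 + lam^-1 (T - t) L)^(-lam), i.e.
   L = lam / (T - t) * (P_{tT}^(-1/lam) - 1)   (for t < T). *)
Definition tail_pareto_rate (R : realType) (lam : R) (P0 : R -> R) (t T : R) : R :=
  lam / (T - t) * ((bond_price P0 t T) `^ (- lam^-1) - 1).

Definition long_tail_pareto_rate (R : realType) (lam : R) (P0 : R -> R) (t : R)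
  : \bar R :=
  limf_esup (fun T : R => (tail_pareto_rate lam P0 t T)%:E) (pinfty_nbhs R).

(* Main.v *)
From mathcomp Require Import all_boot all_order all_algebra.
From mathcomp Require Import all_classical all_reals all_analysis.
Import Order.TTheory GRing.Theory Num.Theory numFieldTopology.Exports.
Local Open Scope ring_scope.
Local Open Scope classical_set_scope.

Require Import Defs.
From mathcomp Require Import lra ring.
Section LS.
Variables (R : realType) (f : R -> R).
Let L := limf_esup (fun x : R => (f x)%:E) (pinfty_nbhs R).

Lemma lsA (l : R) : (forall e, 0 < e -> exists M, forall x, M < x -> f x <= l + e) ->
  (L <= l%:E)%E.
Proof.
move=> H; apply/lee_addgt0Pr => e e0.
have [M HM] := H e e0.
rewrite /L limf_esupE; apply: ge_ereal_inf.
exists (ereal_sup ((fun x : R => (f x)%:E) @` [set x : R | M < x])).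
  by exists [set x : R | M < x] => //; exists M; split => //; exact: num_real.
apply: ge_ereal_sup => _ [x /= Mx <-]; rewrite -EFinD lee_fin; exact: HM.
Qed.

Lemma lsB (l : R) : (forall e, 0 < e -> forall M, exists x, M < x /\ l - e <= f x) ->
  (l%:E <= L)%E.
Proof.
move=> H; rewrite /L limf_esupE; apply: le_ereal_inf_tmp => _ [V [M [_ HV]] <-].
apply/lee_subgt0Pr => e e0.
have [x [Mx hx]] := H e e0 M.
apply: le_trans (ereal_sup_ubound _); last by exists x => //; exact: HV.
by rewrite -EFinB lee_fin.
Qed.

Lemma lsC (l : R) : L = l%:E -> forall e, 0 < e -> exists M, forall x, M < x -> f x <= l + e.
Proof.
move=> hL e e0.
have : (L < (l + e)%:E)%E by rewrite hL lte_fin ltrDl.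
rewrite /L limf_esupE => /ereal_inf_lt [_ [V [M [_ HV]] <-]] hs.
exists M => x Mx.
rewrite -lee_fin; apply: ltW; apply: le_lt_trans hs.
by apply: ereal_sup_ubound; exists x => //; exact: HV.
Qed.

Lemma lsD (l : R) : L = l%:E -> forall e, 0 < e -> forall M, exists x, M < x /\ l - e <= f x.
Proof.
move=> hL e e0 M.
have : ((l - e)%:E < ereal_sup ((fun x : R => (f x)%:E) @` [set x : R | (M < x)%R]))%E.
  apply: lt_le_trans (_ : l%:E <= _)%E; first by rewrite lte_fin gtrDl oppr_lt0.
  rewrite -hL /L limf_esupE; apply: ereal_inf_lbound.
  by exists [set x : R | M < x] => //; exists M; split => //; exact: num_real.
move=> /ereal_sup_gt [_ [x /= Mx <-]]; rewrite lte_fin => h.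
by exists x; split => //; exact: ltW.
Qed.
End LS.
Lemma ar1 (R : realType) (e K D w : R) : 0 < e -> w * e = 2 * K -> w < D -> K <= e / 2 * D.
Proof. move=> e0 hw wD. nra. Qed.

Lemma ar2 (R : realType) (c t D F l e0 e lam N : R) : 0 < c -> 0 <= t -> 0 < D ->
  F <= l + e0 -> c * e0 = e / 2 -> N = c * t * (l+e0) + lam * (c-1) ->
  `|N| + 1 <= e / 2 * D ->
  c * F + (c * t * F + lam * (c-1)) / D <= c * l + e.
Proof.
move=> c0 t0 D0 hF he hN hK.
have h1 : (c * t * F + lam * (c-1)) <= `|N| + 1.
  have hp : 0 <= c * t * (l + e0 - F) by rewrite !mulr_ge0 ?subr_ge0 // ltW.
  have := ler_norm N; rewrite hN; nra.
have h2 : (c * t * F + lam * (c-1)) / D <= e / 2.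
  rewrite ler_pdivrMr //; exact: le_trans h1 hK.
nra.
Qed.

Lemma ar3 (R : realType) (c t D F l e0 e lam N : R) : 0 < c -> 0 <= t -> 0 < D ->
  l - e0 <= F -> c * e0 = e / 2 -> N = c * t * (l-e0) + lam * (c-1) ->
  `|N| + 1 <= e / 2 * D ->
  c * l - e <= c * F + (c * t * F + lam * (c-1)) / D.
Proof.
move=> c0 t0 D0 hF he hN hK.
have h1 : - (`|N| + 1) <= (c * t * F + lam * (c-1)).
  have hp : 0 <= c * t * (F - (l - e0)) by rewrite !mulr_ge0 ?subr_ge0 // ltW.
  have := ler_norm (- N); rewrite normrN; rewrite hN; nra.
have h2 : - (e / 2) <= (c * t * F + lam * (c-1)) / D.
  rewrite ler_pdivlMr //; nra.
nra.
Qed.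

Lemma ident (R : realType) (lam : R) (P0 : R -> R) (t T : R) :
  0 < lam -> P0 0 = 1 -> (forall T : R, 0 <= T -> 0 < P0 T) -> 0 <= t -> t < T ->
  tail_pareto_rate lam P0 t T =
  P0 t `^ lam^-1 * tail_pareto_rate lam P0 0 T +
  (P0 t `^ lam^-1 * t * tail_pareto_rate lam P0 0 T + lam * (P0 t `^ lam^-1 - 1)) / (T - t).
Proof.
move=> l0 P00 Pp t0 tT.
have T0 : 0 < T by apply: le_lt_trans tT.
have pT := Pp T (ltW T0); have pt := Pp t t0.
rewrite /tail_pareto_rate /bond_price P00 divr1 subr0.
have hc : (P0 t)^-1 `^ (- lam^-1) = P0 t `^ lam^-1.
  by rewrite -powR_inv1 ?ltW // -powRrM mulrN mulNr opprK mul1r.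
rewrite powRM ?invr_ge0 ?ltW // hc.
set x := P0 T `^ _; set c := P0 t `^ _.
have hT : T != 0 by rewrite gt_eqF.
have hTt : T - t != 0 by rewrite subr_eq0 gt_eqF.
by field; rewrite hT hTt.
Qed.

Theorem proposition8 (R : realType) (lam : R) (P0 : R -> R) :
  0 < lam ->
  P0 0 = 1 ->
  (forall T : R, 0 <= T -> 0 < P0 T) ->
  long_tail_pareto_rate lam P0 0 \is a fin_num ->
  forall t : R, 0 <= t ->
    long_tail_pareto_rate lam P0 t \is a fin_num /\
    long_tail_pareto_rate lam P0 t =
      ((P0 t `^ (lam^-1))%:E * long_tail_pareto_rate lam P0 0)%E.
Proof.
move=> lam0 P00 Pp fin t t0.
have hl0 : long_tail_pareto_rate lam P0 0 = (fine (long_tail_pareto_rate lam P0 0))%:E.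
  by rewrite fineK.
move: (fine _) hl0 => l0 hl0.
have c0 : 0 < P0 t `^ lam^-1 by apply: powR_gt0; exact: Pp.
move: (P0 t `^ lam^-1) c0 (fun T => @ident R lam P0 t T lam0 P00 Pp t0) => c c0 hid.
have key : long_tail_pareto_rate lam P0 t = (c * l0)%:E.
  have he : forall e : R, 0 < e -> c * (e / 2 / c) = e / 2.
    by move=> e e0; rewrite mulrCA divff ?gt_eqF // mulr1.
  have hw : forall e K : R, 0 < e -> (2 * K / e) * e = 2 * K.
    by move=> e K e0; rewrite divfK ?gt_eqF.
  apply/le_anti/andP; split.
  - apply: lsA => e e0.
    have e0' : 0 < e / 2 / c by rewrite !divr_gt0.
    have [M0 HM0] := @lsC R (tail_pareto_rate lam P0 0) l0 hl0 _ e0'.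
    pose N := c * t * (l0 + e / 2 / c) + lam * (c - 1).
    have K0 : 0 < 2 * (`|N| + 1) / e by rewrite divr_gt0 // mulr_gt0 // ltr_pwDr.
    exists (Num.max M0 (t + 2 * (`|N| + 1) / e)) => T.
    rewrite gt_max => /andP[hM0 hT].
    have tT : t < T by apply: lt_trans hT; rewrite ltrDl.
    rewrite hid //; apply: (@ar2 R c t (T - t) _ l0 (e / 2 / c) e lam N c0 t0 _ (HM0 T hM0) (he e e0) (erefl N)).
    - by rewrite subr_gt0.
    - by apply: (@ar1 R e _ (T - t) _ e0 (hw e _ e0)); rewrite ltrBrDl.
  - apply: lsB => e e0 M.
    have e0' : 0 < e / 2 / c by rewrite !divr_gt0.
    pose N := c * t * (l0 - e / 2 / c) + lam * (c - 1).
    have K0 : 0 < 2 * (`|N| + 1) / e by rewrite divr_gt0 // mulr_gt0 // ltr_pwDr.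
    have [T [hT hF]] := @lsD R (tail_pareto_rate lam P0 0) l0 hl0 _ e0'
       (Num.max M (t + 2 * (`|N| + 1) / e)).
    move: hT; rewrite gt_max => /andP[hM hT].
    have tT : t < T by apply: lt_trans hT; rewrite ltrDl.
    exists T; split => //.
    rewrite hid //; apply: (@ar3 R c t (T - t) _ l0 (e / 2 / c) e lam N c0 t0 _ hF (he e e0) (erefl N)).
    - by rewrite subr_gt0.
    - by apply: (@ar1 R e _ (T - t) _ e0 (hw e _ e0)); rewrite ltrBrDl.
by rewrite key hl0; split.
Qed.
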